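(* Let $G$ be a finite group and let $x_1, \dots, x_n \in G$ be representatives of the distinct rational classes of $G$. Let $\chi \subseteq \{x_1, \dots, x_n\}$ be a largest subset such that for any two distinct $x_i, x_j \in \chi$ we have $\mathrm{Sol}_G(x_i) \neq \mathrm{Sol}_G(x_j)^g$ for all $g \in G$. Then $$|\mathrm{Solv}(G)| = \sum_{x \in \chi} [G : N_G(\mathrm{Sol}_G(x))].$$
   Context: For a finite group $G$ and $x \in G$, the solvabilizer of $x$ in $G$ is $\mathrm{Sol}_G(x) = \{y \in G : \langle x, y \rangle \text{ is solvable}\}$; $\mathrm{Solv}(G) = \{\mathrm{Sol}_G(x) : x \in G\}$ is the set of distinct solvabilizers. The rational class of $x \in G$ is the union of the conjugacy classes $(x^i)^G$ over all integers $i$ with $\gcd(|x|, i) = 1$. For a subset $X \subseteq G$ and $g \in G$, $X^g = \{g^{-1}xg : x \in X\}$, and $N_G(X) = \{g \in G : X^g = X\}$ is the normalizer of the subset $X$. *)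

(* Defs.v *)
From HB Require Import structures.
From mathcomp Require Import all_boot all_order all_fingroup all_solvable.
Set Implicit Arguments. Unset Strict Implicit. Unset Printing Implicit Defensive.
Local Open Scope group_scope.

Definition Sol (gT : finGroupType) (G : {set gT}) (x : gT) : {set gT} :=
  [set y in G | solvable <<[set x; y]>>].

Definition Solv (gT : finGroupType) (G : {set gT}) : {set {set gT}} :=
  [set Sol G x | x in G].

Definition rat_class (gT : finGroupType) (G : {set gT}) (x : gT) : {set gT} :=
  \bigcup_(i < #[x] | coprime #[x] i) ((x ^+ i) ^: G).

Definition rat_class_reps (gT : finGroupType) (G : {set gT}) (X : {set gT}) :=
  [/\ X \subset G,
      {in X &, forall a b, rat_class G a = rat_class G b -> a = b} &
      forall y, y \in G -> exists2 a, a \in X & y \in rat_class G a].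

Definition sol_nonconj (gT : finGroupType) (G : {set gT}) (Y : {set gT}) :=
  {in Y &, forall a b, a != b -> forall g, g \in G -> Sol G a != Sol G b :^ g}.

(* Main.v *)
Require Import Defs.
From HB Require Import structures.
From mathcomp Require Import all_boot all_order all_fingroup all_solvable.
Local Open Scope group_scope.

Section Helpers.
Variables (gT : finGroupType) (G : {group gT}).

Lemma SolJ x g : g \in G -> Sol G (x ^ g) = Sol G x :^ g.
Proof.
move=> Gg; apply/setP=> y; rewrite mem_conjg !inE groupJr ?groupV //.
case: (y \in G) => //=.
have -> : [set x ^ g; y] = [set x; y ^ g^-1] :^ g.
  by rewrite conjUg !conjg_set1 conjgKV.
by rewrite genJ -(isog_sol (conj_isog _ g)).
Qed.

Lemma SolX x i : coprime #[x] i -> Sol G (x ^+ i) = Sol G x.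
Proof.
move=> cop; have gen : generator <[x]> (x ^+ i) by rewrite generator_coprime.
have eqc : <[x]> = <[x ^+ i]> by apply/eqP.
apply/setP=> y; rewrite !inE; case: (y \in G) => //=.
suff -> : <<[set x ^+ i; y]>> = <<[set x; y]>> by [].
have xy : x \in <<[set x; y]>> by rewrite mem_gen // setU11.
have yy : y \in <<[set x; y]>> by rewrite mem_gen // !inE eqxx orbT.
have xi : x ^+ i \in <<[set x ^+ i; y]>> by rewrite mem_gen // setU11.
have yi : y \in <<[set x ^+ i; y]>> by rewrite mem_gen // !inE eqxx orbT.
have x2 : x \in <<[set x ^+ i; y]>>.
  have : x \in <[x ^+ i]> by rewrite -eqc cycle_id.
  by apply: subsetP; rewrite cycle_subG.
apply/eqP; rewrite eqEsubset !gen_subG !subUset !sub1set x2 yi yy andbT /=.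
by rewrite groupX.
Qed.

Lemma SolR a y : y \in rat_class G a -> exists2 g, g \in G & Sol G y = Sol G a :^ g.
Proof.
case/bigcupP=> i cop /imsetP[g Gg ->]; exists g => //.
by rewrite SolJ // SolX.
Qed.

End Helpers.

Theorem theorem6p1 (gT : finGroupType) (G : {group gT}) (X chi : {set gT}) :
  rat_class_reps G X ->
  chi \subset X ->
  sol_nonconj G chi ->
  (forall Y : {set gT}, Y \subset X -> sol_nonconj G Y -> #|Y| <= #|chi|)%N ->
  #|Solv G| = (\sum_(x in chi) #|G : 'N_G(Sol G x)|)%N.
Proof.
case=> sXG injX covX sCX ncC maxC.
have chiG : chi \subset G := subset_trans sCX sXG.
have maxP : forall a, a \in X ->
    exists b, [/\ b \in chi & exists2 h, h \in G & Sol G a = Sol G b :^ h].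
  move=> a Xa.
  case: (boolP [exists b in chi, exists h in G, Sol G a == Sol G b :^ h]).
    case/exists_inP=> b Cb /exists_inP[h Gh /eqP E].
    by exists b; split=> //; exists h.
  move/exists_inPn=> nE; exfalso.
  have nE' : forall b h, b \in chi -> h \in G -> Sol G a != Sol G b :^ h.
    by move=> b h Cb Gh; have /exists_inPn := nE b Cb; apply.
  have aC : a \notin chi.
    by apply/negP=> Ca; have := nE' a 1 Ca (group1 G); rewrite conjsg1 eqxx.
  have nc : sol_nonconj G (a |: chi).
    move=> u v; rewrite !inE.
    case/predU1P=> [->|Cu]; case/predU1P=> [->|Cv] //.
    - by rewrite eqxx.
    - by move=> _ g Gg; apply: nE'.
    - move=> _ g Gg; apply/eqP=> E.
      have := nE' u g^-1 Cu (groupVr Gg).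
      by rewrite E conjsgK eqxx.
    - exact: ncC.
  have sub : a |: chi \subset X by rewrite subUset sub1set Xa sCX.
  by have := maxC _ sub nc; rewrite cardsU1 aC ltnn.
pose O x := Sol G x :^: G.
have OSol : forall x, Sol G x \in O x.
  by move=> x; apply/imsetP; exists 1; rewrite ?group1 ?conjsg1.
have defS : Solv G = \bigcup_(x in chi) O x.
  apply/setP=> A; apply/imsetP/bigcupP.
  - case=> y Gy ->; have [a Xa ya] := covX y Gy.
    have [g Gg E1] := @SolR _ G _ _ ya.
    have [b [Cb [h Gh E2]]] := maxP a Xa.
    exists b => //; apply/imsetP; exists (h * g); first by rewrite groupM.
    by rewrite E1 E2 conjsgM.
  - case=> b Cb /imsetP[g Gg ->]; exists (b ^ g).
      by rewrite groupJ // (subsetP chiG).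
    by rewrite SolJ.
have tiO : {in chi &, forall i j, j != i -> [disjoint O i & O j]}.
  move=> i j Ci Cj nji; apply/pred0P=> A /=; apply/negP; case/andP.
  case/imsetP=> g Gg -> /imsetP[h Gh E].
  have := ncC j i Cj Ci nji (g * h^-1) (groupM Gg (groupVr Gh)).
  by rewrite conjsgM E conjsgK eqxx.
have n0 : set0 \notin O @: chi.
  apply/imsetP=> -[x _ E]; have := OSol x; by rewrite -E inE.
have [tiP injO] := trivIimset tiO n0.
have part : partition (O @: chi) (Solv G).
  by rewrite /partition cover_imset -defS eqxx tiP n0.
rewrite (card_partition part) big_imset //.
by apply: eq_bigr => x _; rewrite card_conjugates.
Qed.
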